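(* Let $H_0$ be an admissible Hamiltonian, $H_1(x)=\tfrac12x^TA\mathcal Hx$ (so $\nabla H_1=A\nabla H_0$), $f_0=J\nabla H_0$ and $f_1=J\nabla H_1$ (so $f_1=A^Tf_0$). Then for all $x$: $$f_0'(x)f_1(x)=f_1'(x)f_0(x),\qquad f_0'(x)f_1'(x)=f_1'(x)f_0'(x).$$
   Context: Fix an integer $n\ge 2$. Points of $\mathbb R^{2n}$ are $x=(x_1,\dots,x_{2n})^{T}$; write $u=(x_1,\dots,x_n)^T$. Let $X(u)$ be the $n\times n$ matrix with entries $X(u)_{ij}=x_{k}$ where $k\in\{1,\dots,n\}$, $k\equiv i+j-1 \pmod n$, and let $J(x)=\begin{pmatrix}0&X(u)\\-X(u)&0\end{pmatrix}$. Let $\mathcal P$ be the $n\times n$ cyclic shift matrix ($\mathcal P_{i,i+1}=1$ for $1\le i\le n-1$, $\mathcal P_{n,1}=1$, all other entries $0$) and $A=\begin{pmatrix}\mathcal P&0\\0&\mathcal P\end{pmatrix}$. An admissible Hamiltonian is a homogeneous quadratic form $H(x)=\tfrac12 x^T\mathcal H x$ with a constant symmetric matrix $\mathcal H=\nabla^2H$ satisfying $A\mathcal H=\mathcal H A^T$; $f'(x)$ denotes the Jacobi matrix of a vector field $f$. *)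

(* Defs.v *)
(* Vectors of R^m are functions nat -> R (only indices
   0..m-1 matter), matrices are functions nat -> nat -> R. Indices are 0-based. *)
From Stdlib Require Import Reals Arith List.
Import ListNotations.
Open Scope R_scope.

Definition vsum (m : nat) (f : nat -> R) : R :=
  fold_right Rplus 0 (map f (seq 0 m)).

Definition vec := nat -> R.
Definition mat := nat -> nat -> R.

Definition mulmv (m : nat) (M : mat) (v : vec) : vec :=
  fun i => vsum m (fun k => M i k * v k).
Definition mulmm (m : nat) (M N : mat) : mat :=
  fun i j => vsum m (fun k => M i k * N k j).
Definition trm (M : mat) : mat := fun i j => M j i.

(* X(u)_{ij} = x_k, k = i+j-1 mod n (1-based)  <=>  0-based: x_{(i+j) mod n} *)
Definition Xmat (n : nat) (x : vec) : mat :=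
  fun i j => x ((i + j) mod n)%nat.

Definition Jmat (n : nat) (x : vec) : mat :=
  fun i j =>
    if (i <? n)%nat then
      (if (j <? n)%nat then 0 else Xmat n x i (j - n)%nat)
    else
      (if (j <? n)%nat then - Xmat n x (i - n)%nat j else 0).

(* cyclic shift: P_{i,i+1} = 1, P_{n,1} = 1 (1-based) <=> P_{i,(i+1) mod n} = 1 (0-based) *)
Definition Pmat (n : nat) : mat :=
  fun i j => if (j =? (i + 1) mod n)%nat then 1 else 0.

Definition Amat (n : nat) : mat :=
  fun i j =>
    if (i <? n)%nat then
      (if (j <? n)%nat then Pmat n i j else 0)
    else
      (if (j <? n)%nat then 0 else Pmat n (i - n)%nat (j - n)%nat).

(* admissible Hamiltonian H(x) = 1/2 x^T Hm x: Hm symmetric, A Hm = Hm A^T *)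
Definition admissible (n : nat) (Hm : mat) : Prop :=
  (forall i j, (i < 2 * n)%nat -> (j < 2 * n)%nat -> Hm i j = Hm j i) /\
  (forall i j, (i < 2 * n)%nat -> (j < 2 * n)%nat ->
     mulmm (2 * n) (Amat n) Hm i j = mulmm (2 * n) Hm (trm (Amat n)) i j).

(* gradient of the quadratic form x |-> 1/2 x^T M x, i.e. 1/2 (M + M^T) x *)
Definition grad_quad (m : nat) (M : mat) (x : vec) : vec :=
  fun i => / 2 * (mulmv m M x i + mulmv m (trm M) x i).

Definition ham_field (n : nat) (M : mat) (x : vec) : vec :=
  mulmv (2 * n) (Jmat n x) (grad_quad (2 * n) M x).

Definition shift (x : vec) (j : nat) (t : R) : vec :=
  fun k => if (k =? j)%nat then x k + t else x k.

Definition is_jacobian (m : nat) (f : vec -> vec) (x : vec) (D : mat) : Prop :=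
  forall i j, (i < m)%nat -> (j < m)%nat ->
    derivable_pt_lim (fun t => f (shift x j t) i) 0 (D i j).

(* Main.v *)
Require Import Defs.
From Stdlib Require Import Reals Arith List Lia Lra Permutation FunctionalExtensionality.
Open Scope R_scope.

Lemma vsum_S m f : vsum (S m) f = vsum m f + f m.
Proof.
  unfold vsum. rewrite seq_S, map_app, fold_right_app. simpl.
  generalize (map f (seq 0 m)). intro l. induction l; simpl; [ring| rewrite IHl; ring].
Qed.

Lemma vsum_ext m f g : (forall k, (k<m)%nat -> f k = g k) -> vsum m f = vsum m g.
Proof. induction m; intros H; [reflexivity|]. rewrite !vsum_S, IHm, H; auto. Qed.

Lemma vsum_plus m f g : vsum m (fun k => f k + g k) = vsum m f + vsum m g.
Proof. induction m; [simpl; unfold vsum; simpl; ring|]. rewrite !vsum_S, IHm; ring. Qed.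

Lemma vsum_scal m c f : vsum m (fun k => c * f k) = c * vsum m f.
Proof. induction m; [unfold vsum; simpl; ring|]. rewrite !vsum_S, IHm; ring. Qed.

Lemma vsum_delta_gen m a v :
  vsum m (fun k => (if (k =? a)%nat then 1 else 0) * v k) = if (a <? m)%nat then v a else 0.
Proof.
  induction m; [reflexivity|]. rewrite vsum_S, IHm.
  destruct (Nat.ltb_spec a m), (Nat.ltb_spec a (S m)), (Nat.eqb_spec m a); subst; try lia; ring.
Qed.

Lemma vsum_delta m a v : (a < m)%nat ->
  vsum m (fun k => (if (k =? a)%nat then 1 else 0) * v k) = v a.
Proof. intro H. rewrite vsum_delta_gen. destruct (Nat.ltb_spec a m); [reflexivity|lia]. Qed.

Lemma vsum_delta_r m a v : (a < m)%nat ->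
  vsum m (fun k => v k * (if (k =? a)%nat then 1 else 0)) = v a.
Proof. intro H. rewrite <- (vsum_delta m a v H). apply vsum_ext; intros; ring. Qed.

Lemma fold_perm l l' : Permutation l l' -> fold_right Rplus 0 l = fold_right Rplus 0 l'.
Proof. induction 1; simpl; try lra. Qed.

Lemma vsum_reindex m (s p : nat -> nat) f :
  (forall k, (k < m)%nat -> (s k < m)%nat) ->
  (forall k, (k < m)%nat -> (p k < m)%nat) ->
  (forall k, (k < m)%nat -> s (p k) = k) ->
  vsum m (fun k => f (s k)) = vsum m f.
Proof.
  intros Hs Hp Hsp. unfold vsum. rewrite <- map_map.
  apply fold_perm. apply Permutation_map. symmetry.
  apply NoDup_Permutation_bis.
  - apply seq_NoDup.
  - rewrite length_map. lia.
  - intros k Hk. apply in_seq in Hk. rewrite <- (Hsp k) by lia. apply in_map.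
    apply in_seq. specialize (Hp k). lia.
Qed.

Definition sidx (n i : nat) : nat :=
  if (i <? n)%nat then ((i + 1) mod n)%nat else (n + (i - n + 1) mod n)%nat.
Definition pidx (n i : nat) : nat :=
  if (i <? n)%nat then ((i + n - 1) mod n)%nat else (n + (i - n + n - 1) mod n)%nat.

Lemma mod_lt n a : (0 < n)%nat -> (a mod n < n)%nat.
Proof. intro; apply Nat.mod_upper_bound; lia. Qed.

Lemma addn_mod n a : (0 < n)%nat -> (a < n)%nat -> ((a + n) mod n = a)%nat.
Proof.
  intros. replace (a + n)%nat with (a + 1 * n)%nat by lia.
  rewrite Nat.mod_add by lia. apply Nat.mod_small; lia.
Qed.

Ltac modr n := repeat first [ rewrite Nat.Div0.add_mod_idemp_l | rewrite Nat.Div0.add_mod_idemp_r ].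

Section Idx.
Variable n : nat.
Hypothesis Hn : (0 < n)%nat.

Lemma s_lt i : (i < 2 * n)%nat -> (sidx n i < 2 * n)%nat.
Proof. intro. unfold sidx. pose proof (mod_lt n (i+1) Hn). pose proof (mod_lt n (i - n + 1) Hn).
  destruct (Nat.ltb_spec i n); lia. Qed.
Lemma p_lt i : (i < 2 * n)%nat -> (pidx n i < 2 * n)%nat.
Proof. intro. unfold pidx. pose proof (mod_lt n (i+n-1) Hn). pose proof (mod_lt n (i - n + n - 1) Hn).
  destruct (Nat.ltb_spec i n); lia. Qed.
Lemma s_blk i : (sidx n i <? n)%nat = (i <? n)%nat.
Proof. unfold sidx. pose proof (mod_lt n (i+1) Hn).
  destruct (Nat.ltb_spec i n); apply Nat.ltb_lt || apply Nat.ltb_ge; lia. Qed.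
Lemma p_blk i : (pidx n i <? n)%nat = (i <? n)%nat.
Proof. unfold pidx. pose proof (mod_lt n (i+n-1) Hn).
  destruct (Nat.ltb_spec i n); apply Nat.ltb_lt || apply Nat.ltb_ge; lia. Qed.

Lemma ps i : (i < 2 * n)%nat -> pidx n (sidx n i) = i.
Proof.
  intro. unfold pidx. rewrite s_blk. unfold sidx. destruct (Nat.ltb_spec i n).
  - replace ((i + 1) mod n + n - 1)%nat with ((i+1) mod n + (n-1))%nat by lia.
    modr n. replace (i + 1 + (n - 1))%nat with (i + n)%nat by lia. apply addn_mod; lia.
  - replace (n + (i - n + 1) mod n - n + n - 1)%nat with ((i - n + 1) mod n + (n - 1))%nat by lia.
    modr n. replace (i - n + 1 + (n - 1))%nat with (i - n + n)%nat by lia.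
    rewrite addn_mod; lia.
Qed.

Lemma sp i : (i < 2 * n)%nat -> sidx n (pidx n i) = i.
Proof.
  intro. unfold sidx. rewrite p_blk. unfold pidx. destruct (Nat.ltb_spec i n).
  - modr n. replace (i + n - 1 + 1)%nat with (i + n)%nat by lia. apply addn_mod; lia.
  - replace (n + (i - n + n - 1) mod n - n + 1)%nat with ((i - n + n - 1) mod n + 1)%nat by lia.
    modr n. replace (i - n + n - 1 + 1)%nat with (i - n + n)%nat by lia.
    rewrite addn_mod; lia.
Qed.

Lemma p_small m : (m < n)%nat -> pidx n m = ((m + n - 1) mod n)%nat.
Proof. intro. unfold pidx. destruct (Nat.ltb_spec m n); lia || reflexivity. Qed.

Lemma Amat_s i j : (i < 2 * n)%nat -> Amat n i j = if (j =? sidx n i)%nat then 1 else 0.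
Proof.
  intro. unfold Amat, Pmat, sidx. pose proof (mod_lt n (i+1) Hn). pose proof (mod_lt n (i - n + 1) Hn).
  destruct (Nat.ltb_spec i n), (Nat.ltb_spec j n).
  - reflexivity.
  - destruct (Nat.eqb_spec j ((i+1) mod n)); lia || reflexivity.
  - destruct (Nat.eqb_spec j (n + (i - n + 1) mod n)); lia || reflexivity.
  - replace (i - n + 1)%nat with (i - n + 1)%nat by lia.
    destruct (Nat.eqb_spec (j - n) ((i - n + 1) mod n)), (Nat.eqb_spec j (n + (i - n + 1) mod n)); lia || reflexivity.
Qed.

Lemma J_F2 y i k : (i < 2*n)%nat -> (k < 2*n)%nat ->
  Jmat n y i (pidx n k) = Jmat n y (pidx n i) k.
Proof.
  intros Hi Hk. unfold Jmat. rewrite !p_blk. unfold Xmat, pidx.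
  destruct (Nat.ltb_spec i n), (Nat.ltb_spec k n); try reflexivity.
  - f_equal. replace (n + (k - n + n - 1) mod n - n)%nat with ((k - n + n - 1) mod n)%nat by lia.
    modr n. f_equal. lia.
  - f_equal. f_equal. replace (n + (i - n + n - 1) mod n - n)%nat with ((i - n + n - 1) mod n)%nat by lia.
    modr n. f_equal. lia.
Qed.

Lemma J_F3 v i k : (i < 2*n)%nat -> (k < 2*n)%nat ->
  Jmat n (fun m => v (pidx n m)) i k = Jmat n v (pidx n i) k.
Proof.
  intros Hi Hk. unfold Jmat. rewrite !p_blk. unfold Xmat.
  destruct (Nat.ltb_spec i n), (Nat.ltb_spec k n); try reflexivity.
  - rewrite p_small by (apply mod_lt; lia). rewrite (p_small i) by lia. f_equal.
    replace ((i + (k - n)) mod n + n - 1)%nat with ((i + (k-n)) mod n + (n-1))%nat by lia.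
    modr n. f_equal. lia.
  - rewrite p_small by (apply mod_lt; lia). f_equal. f_equal. unfold pidx.
    replace ((i - n + k) mod n + n - 1)%nat with ((i - n + k) mod n + (n-1))%nat by lia.
    destruct (Nat.ltb_spec i n); try lia.
    replace (n + (i - n + n - 1) mod n - n)%nat with ((i - n + n - 1) mod n)%nat by lia.
    modr n. f_equal. lia.
Qed.

Lemma Jmat_ext a b i k : (forall m, (m < n)%nat -> a m = b m) -> Jmat n a i k = Jmat n b i k.
Proof.
  intro H. unfold Jmat, Xmat. destruct (i <? n)%nat, (k <? n)%nat; try reflexivity;
  rewrite H; auto; apply mod_lt; lia.
Qed.
End Idx.

Definition ej (j : nat) : vec := fun k => if (k =? j)%nat then 1 else 0.

Definition DJ n (M : mat) (x : vec) : mat := fun i j =>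
  mulmv (2*n) (Jmat n (ej j)) (grad_quad (2*n) M x) i +
  mulmv (2*n) (Jmat n x) (grad_quad (2*n) M (ej j)) i.

Lemma Jmat_lin n a b t i l :
  Jmat n (fun k => a k + t * b k) i l = Jmat n a i l + t * Jmat n b i l.
Proof. unfold Jmat, Xmat. destruct (i <? n)%nat, (l <? n)%nat; ring. Qed.

Lemma mulmv_lin m M a b t l :
  mulmv m M (fun k => a k + t * b k) l = mulmv m M a l + t * mulmv m M b l.
Proof.
  unfold mulmv. rewrite <- vsum_scal, <- vsum_plus. apply vsum_ext; intros; ring.
Qed.

Lemma grad_lin m M a b t l :
  grad_quad m M (fun k => a k + t * b k) l = grad_quad m M a l + t * grad_quad m M b l.
Proof. unfold grad_quad. rewrite !mulmv_lin. ring. Qed.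

Lemma quad_deriv a b c : derivable_pt_lim (fun t => a + t * b + t ^ 2 * c) 0 b.
Proof.
  intros eps Heps.
  assert (Hd : 0 < eps / (Rabs c + 1)).
  { apply Rdiv_lt_0_compat; [lra|]. pose proof (Rabs_pos c); lra. }
  exists (mkposreal _ Hd). intros h Hh0 Hh. simpl in Hh.
  replace ((a + (0 + h) * b + (0 + h) ^ 2 * c - (a + 0 * b + 0 ^ 2 * c)) / h - b) with (h * c)
    by (field; auto).
  rewrite Rabs_mult. pose proof (Rabs_pos c). pose proof (Rabs_pos h).
  apply Rlt_le_trans with (eps / (Rabs c + 1) * (Rabs c + 1)).
  - apply Rle_lt_trans with (Rabs h * (Rabs c + 1)); [nra|].
    apply Rmult_lt_compat_r; lra.
  - right; field; lra.
Qed.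

Lemma shift_eq x j t : shift x j t = fun k => x k + t * ej j k.
Proof.
  apply functional_extensionality; intro k. unfold shift, ej.
  destruct (k =? j)%nat; ring.
Qed.

Lemma jac_gen n M x : is_jacobian (2*n) (ham_field n M) x (DJ n M x).
Proof.
  intros i j Hi Hj.
  set (a := ham_field n M x i).
  set (c := mulmv (2*n) (Jmat n (ej j)) (grad_quad (2*n) M (ej j)) i).
  assert (E : (fun t => ham_field n M (shift x j t) i) = (fun t => a + t * DJ n M x i j + t ^ 2 * c)).
  { apply functional_extensionality; intro t. rewrite shift_eq.
    unfold a, c, DJ, ham_field, mulmv.
    set (g := grad_quad (2*n) M).
    transitivity (vsum (2*n) (fun l => (Jmat n x i l * g x l + t * (Jmat n (ej j) i l * g x l + Jmat n x i l * g (ej j) l)) + t^2 * (Jmat n (ej j) i l * g (ej j) l))).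
    - apply vsum_ext; intros l _. unfold g. rewrite Jmat_lin, grad_lin. ring.
    - rewrite !vsum_plus, !vsum_scal, !vsum_plus. reflexivity. }
  rewrite E. apply quad_deriv.
Qed.

Section Alg.
Variable n : nat.
Variable Hm : mat.
Hypothesis Hn : (2 <= n)%nat.
Hypothesis Hsym : forall i j, (i < 2 * n)%nat -> (j < 2 * n)%nat -> Hm i j = Hm j i.
Hypothesis Hadm : forall i j, (i < 2 * n)%nat -> (j < 2 * n)%nat ->
     mulmm (2 * n) (Amat n) Hm i j = mulmm (2 * n) Hm (trm (Amat n)) i j.

Let Hn0 : (0 < n)%nat. Proof. lia. Qed.
Let s := sidx n.
Let p := pidx n.
Definition G (z : vec) (i : nat) := vsum (2*n) (fun k => Hm i k * z k).

Lemma M1_entry i k : (i < 2*n)%nat -> mulmm (2*n) (Amat n) Hm i k = Hm (s i) k.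
Proof.
  intro Hi. unfold mulmm.
  rewrite (vsum_ext _ _ (fun l => (if (l =? s i)%nat then 1 else 0) * Hm l k)).
  - apply (vsum_delta _ _ (fun l => Hm l k)). apply s_lt; auto.
  - intros l _. rewrite Amat_s by auto. reflexivity.
Qed.

Lemma adm_s i j : (i < 2*n)%nat -> (j < 2*n)%nat -> Hm (s i) j = Hm i (s j).
Proof.
  intros Hi Hj. rewrite <- M1_entry by auto. rewrite Hadm by auto. unfold mulmm, trm.
  rewrite (vsum_ext _ _ (fun l => Hm i l * (if (l =? s j)%nat then 1 else 0))).
  - apply (vsum_delta_r _ _ (fun l => Hm i l)). apply s_lt; auto.
  - intros l _. rewrite Amat_s by auto. reflexivity.
Qed.

Lemma grad0 z i : (i < 2*n)%nat -> grad_quad (2*n) Hm z i = G z i.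
Proof.
  intro Hi. unfold grad_quad, mulmv, trm, G.
  rewrite (vsum_ext _ (fun k => Hm k i * z k) (fun k => Hm i k * z k)).
  - field.
  - intros k Hk. rewrite Hsym by auto. reflexivity.
Qed.

Lemma grad1 z i : (i < 2*n)%nat ->
  grad_quad (2*n) (mulmm (2*n) (Amat n) Hm) z i = G z (s i).
Proof.
  intro Hi. pose proof (s_lt n Hn0 i Hi) as Hsi. unfold grad_quad, mulmv, trm, G.
  rewrite (vsum_ext _ (fun k => mulmm (2 * n) (Amat n) Hm i k * z k) (fun k => Hm (s i) k * z k)).
  rewrite (vsum_ext _ (fun k => mulmm (2 * n) (Amat n) Hm k i * z k) (fun k => Hm (s i) k * z k)).
  - field.
  - intros k Hk. rewrite M1_entry by auto. rewrite adm_s by auto. rewrite Hsym by auto. reflexivity.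
  - intros k Hk. rewrite M1_entry by auto. reflexivity.
Qed.

Lemma B_shift y w i : (i < 2*n)%nat ->
  vsum (2*n) (fun l => Jmat n y i l * w (s l)) = vsum (2*n) (fun l => Jmat n y (p i) l * w l).
Proof.
  intro Hi.
  rewrite <- (vsum_reindex (2*n) p s (fun l => Jmat n y i l * w (s l))).
  - apply vsum_ext; intros k Hk. unfold s, p. rewrite sp by auto. rewrite J_F2 by auto. reflexivity.
  - intros; apply p_lt; auto.
  - intros; apply s_lt; auto.
  - intros; apply ps; auto.
Qed.

Lemma DJ1 x i j : (i < 2*n)%nat -> (j < 2*n)%nat ->
  DJ n (mulmm (2*n) (Amat n) Hm) x i j = DJ n Hm x (p i) j.
Proof.
  intros Hi Hj. pose proof (p_lt n Hn0 i Hi). unfold DJ, mulmv.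
  rewrite (vsum_ext _ (fun k => Jmat n (ej j) i k * grad_quad (2 * n) (mulmm (2 * n) (Amat n) Hm) x k)
     (fun k => Jmat n (ej j) i k * G x (s k))).
  rewrite (vsum_ext _ (fun k => Jmat n x i k * grad_quad (2 * n) (mulmm (2 * n) (Amat n) Hm) (ej j) k)
     (fun k => Jmat n x i k * G (ej j) (s k))).
  rewrite (vsum_ext _ (fun k => Jmat n (ej j) (p i) k * grad_quad (2 * n) Hm x k)
     (fun k => Jmat n (ej j) (p i) k * G x k)).
  rewrite (vsum_ext _ (fun k => Jmat n x (p i) k * grad_quad (2 * n) Hm (ej j) k)
     (fun k => Jmat n x (p i) k * G (ej j) k)).
  - rewrite !B_shift by auto. reflexivity.
  - intros; rewrite grad0; auto.
  - intros; rewrite grad0; auto.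
  - intros; rewrite grad1; auto.
  - intros; rewrite grad1; auto.
Qed.

Lemma f1eq x i : (i < 2*n)%nat ->
  ham_field n (mulmm (2*n) (Amat n) Hm) x i = ham_field n Hm x (p i).
Proof.
  intros Hi. pose proof (p_lt n Hn0 i Hi). unfold ham_field, mulmv.
  rewrite (vsum_ext _ (fun k => Jmat n x i k * grad_quad (2 * n) (mulmm (2 * n) (Amat n) Hm) x k)
     (fun k => Jmat n x i k * G x (s k))).
  rewrite (vsum_ext _ (fun k => Jmat n x (p i) k * grad_quad (2 * n) Hm x k)
     (fun k => Jmat n x (p i) k * G x k)).
  - apply B_shift; auto.
  - intros; rewrite grad0; auto.
  - intros; rewrite grad1; auto.
Qed.

Lemma ej_s j m : (j < 2*n)%nat -> (m < 2*n)%nat -> ej (s j) m = ej j (p m).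
Proof.
  intros Hj Hm'. unfold ej.
  destruct (Nat.eqb_spec m (s j)) as [E1|E1], (Nat.eqb_spec (p m) j) as [E2|E2]; auto; exfalso.
  - subst. unfold p, s in E2. rewrite ps in E2; auto.
  - subst. unfold p, s in E1. rewrite sp in E1; auto.
Qed.

Lemma G_ej j k : (j < 2*n)%nat -> G (ej j) k = Hm k j.
Proof. intro. unfold G, ej. apply (vsum_delta_r _ _ (fun l => Hm k l)); auto. Qed.

Lemma DJrc x i j : (i < 2*n)%nat -> (j < 2*n)%nat ->
  DJ n Hm x (p i) j = DJ n Hm x i (s j).
Proof.
  intros Hi Hj. pose proof (p_lt n Hn0 i Hi). pose proof (s_lt n Hn0 j Hj). unfold DJ, mulmv.
  f_equal.
  - apply vsum_ext; intros k Hk. f_equal.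
    rewrite (Jmat_ext n Hn0 (ej (s j)) (fun m => ej j (p m))).
    + unfold p. rewrite J_F3 by auto. reflexivity.
    + intros m Hm'. apply ej_s; auto; lia.
  - rewrite (vsum_ext _ (fun k => Jmat n x i k * grad_quad (2 * n) Hm (ej (s j)) k)
       (fun k => Jmat n x i k * G (ej j) (s k))).
    rewrite (vsum_ext _ (fun k => Jmat n x (p i) k * grad_quad (2 * n) Hm (ej j) k)
       (fun k => Jmat n x (p i) k * G (ej j) k)).
    + symmetry. apply B_shift; auto.
    + intros; rewrite grad0; auto.
    + intros k Hk. rewrite grad0 by auto. rewrite !G_ej by (auto; apply s_lt; auto).
      rewrite adm_s; auto.
Qed.
End Alg.

Theorem mainTheorem14 (n : nat) (Hm : mat) :
  (2 <= n)%nat -> admissible n Hm ->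
  let f0 := ham_field n Hm in
  let f1 := ham_field n (mulmm (2 * n) (Amat n) Hm) in
  forall x : vec,
    (exists D0 D1 : mat,
        is_jacobian (2 * n) f0 x D0 /\ is_jacobian (2 * n) f1 x D1) /\
    (forall D0 D1 : mat,
        is_jacobian (2 * n) f0 x D0 -> is_jacobian (2 * n) f1 x D1 ->
        (forall i, (i < 2 * n)%nat ->
           mulmv (2 * n) D0 (f1 x) i = mulmv (2 * n) D1 (f0 x) i) /\
        (forall i j, (i < 2 * n)%nat -> (j < 2 * n)%nat ->
           mulmm (2 * n) D0 D1 i j = mulmm (2 * n) D1 D0 i j)).
Proof.
  intros Hn [Hsym Hadm] f0 f1 x.
  assert (Hn0 : (0 < n)%nat) by lia.
  unfold f0, f1 in *. clear f0 f1.
  split.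
  { exists (DJ n Hm x), (DJ n (mulmm (2 * n) (Amat n) Hm) x). split; apply jac_gen. }
  intros D0 D1 H0 H1.
  set (D := DJ n Hm x).
  assert (E0 : forall i j, (i < 2*n)%nat -> (j < 2*n)%nat -> D0 i j = D i j).
  { intros i j Hi Hj. eapply uniqueness_limite; [apply H0; auto | apply jac_gen; auto]. }
  assert (E1 : forall i j, (i < 2*n)%nat -> (j < 2*n)%nat -> D1 i j = D (pidx n i) j).
  { intros i j Hi Hj. unfold D. rewrite <- DJ1 by auto.
    eapply uniqueness_limite; [apply H1; auto | apply jac_gen; auto]. }
  assert (Hrc : forall i j, (i < 2*n)%nat -> (j < 2*n)%nat -> D (pidx n i) j = D i (sidx n j)).
  { intros; unfold D; apply DJrc; auto. }
  split.
  - intros i Hi. unfold mulmv.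
    rewrite (vsum_ext _ (fun k => D0 i k * ham_field n (mulmm (2 * n) (Amat n) Hm) x k)
       (fun k => D i k * ham_field n Hm x (pidx n k))).
    2:{ intros k Hk. rewrite E0, f1eq by auto. reflexivity. }
    rewrite (vsum_ext _ (fun k => D1 i k * ham_field n Hm x k)
       (fun k => D i (sidx n k) * ham_field n Hm x k)).
    2:{ intros k Hk. rewrite E1, Hrc by auto. reflexivity. }
    rewrite <- (vsum_reindex (2*n) (sidx n) (pidx n) (fun k => D i k * ham_field n Hm x (pidx n k))).
    + apply vsum_ext; intros k Hk. rewrite ps by auto. reflexivity.
    + intros; apply s_lt; auto.
    + intros; apply p_lt; auto.
    + intros; apply sp; auto.
  - intros i j Hi Hj. unfold mulmm.
    rewrite (vsum_ext _ (fun k => D0 i k * D1 k j)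
       (fun k => D i k * D (pidx n k) j)).
    2:{ intros k Hk. rewrite E0, E1 by auto. reflexivity. }
    rewrite (vsum_ext _ (fun k => D1 i k * D0 k j)
       (fun k => D i (sidx n k) * D k j)).
    2:{ intros k Hk. rewrite E1, E0, Hrc by auto. reflexivity. }
    rewrite <- (vsum_reindex (2*n) (sidx n) (pidx n) (fun k => D i k * D (pidx n k) j)).
    + apply vsum_ext; intros k Hk. rewrite ps by auto. reflexivity.
    + intros; apply s_lt; auto.
    + intros; apply p_lt; auto.
    + intros; apply sp; auto.
Qed.
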